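(* Let $\Theta$ be a finite set, $b$ a belief function on $\Theta$ with mass function $m_b$, and $\emptyset \subsetneq A \subseteq \Theta$. There is a unique $L_2$ conditional belief function $b_{L_2,\mathcal{M}}(\cdot|A)$ of $b$ with respect to $A$ in the mass space (minimizer of $\|\vec{m}_b - \vec{m}_a\|_{L_2}$ over $\vec{m}_a\in\mathcal{M}_A$), and its mass function is, for all $\emptyset \subsetneq B \subseteq A$, \[ m_{L_2,\mathcal{M}}(B|A) = m_b(B) + \frac{1}{2^{|A|}-1} \sum_{C \not\subseteq A} m_b(C) = m_b(B) + \frac{pl_b(A^c)}{2^{|A|}-1}, \] (and it assigns zero mass to subsets not contained in $A$), where the sum runs over nonempty $C\subseteq\Theta$ not contained in $A$.
   Context: A mass function on a finite set $\Theta$ is $m:2^\Theta\to[0,1]$ with $m(\emptyset)=0$ and $\sum_{A\subseteq\Theta} m(A)=1$; the associated belief function is $b(A)=\sum_{B\subseteq A} m_b(B)$ and plausibility $pl_b(A)=1-b(A^c)$. The mass vector of $b$ is $\vec{m}_b=[m_b(B)]_{\emptyset\subsetneq B\subseteq\Theta}\in\mathbb{R}^{2^{|\Theta|}-1}$. For $\emptyset\subsetneq A\subseteq\Theta$, $\mathcal{M}_A$ is the set of mass vectors of belief functions all of whose focal elements (subsets of nonzero mass) are subsets of $A$. The $L_2$ distance is $\|\vec{m}_b-\vec{m}_{b'}\|_{L_2}=\sqrt{\sum_{\emptyset\subsetneq B\subseteq\Theta}(m_b(B)-m_{b'}(B))^2}$. *)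

(* Defs.v *)
(* Theta is a finType T; scalars are an arbitrary real closed
   field R (so that Num.sqrt is available for the L2 norm). *)
From HB Require Import structures.
From mathcomp Require Import all_boot all_order all_algebra.
Set Implicit Arguments. Unset Strict Implicit. Unset Printing Implicit Defensive.
Import Order.TTheory GRing.Theory Num.Theory.
Local Open Scope ring_scope.

Definition is_mass (R : numDomainType) (T : finType) (m : {ffun {set T} -> R}) : Prop :=
  [/\ m set0 = 0, (forall A, 0 <= m A) & \sum_(A : {set T}) m A = 1].

Definition bel (R : numDomainType) (T : finType) (m : {ffun {set T} -> R}) (A : {set T}) : R :=
  \sum_(B : {set T} | B \subset A) m B.
Definition pl (R : numDomainType) (T : finType) (m : {ffun {set T} -> R}) (A : {set T}) : R :=
  1 - bel m (~: A).

Definition in_MA (R : numDomainType) (T : finType) (A : {set T}) (m : {ffun {set T} -> R}) : Prop :=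
  is_mass m /\ (forall B : {set T}, m B != 0 -> B \subset A).

Definition massL2 (R : rcfType) (T : finType) (m m' : {ffun {set T} -> R}) : R :=
  Num.sqrt (\sum_(B : {set T} | B != set0) (m B - m' B) ^+ 2).

Definition is_L2_cond (R : rcfType) (T : finType) (m : {ffun {set T} -> R}) (A : {set T})
    (ma : {ffun {set T} -> R}) : Prop :=
  in_MA A ma /\ (forall m' : {ffun {set T} -> R}, in_MA A m' -> massL2 m ma <= massL2 m m').

(* Main.v *)
Require Import Defs.
From HB Require Import structures.
From mathcomp Require Import all_boot all_order all_algebra.
From mathcomp Require Import ring.
Import Order.TTheory GRing.Theory Num.Theory.
Local Open Scope ring_scope.

Theorem theorem3 (R : rcfType) (T : finType) (m : {ffun {set T} -> R}) (A : {set T}) :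
  is_mass m -> A != set0 ->
  (exists! ma : {ffun {set T} -> R}, is_L2_cond m A ma) /\
  (forall ma : {ffun {set T} -> R}, is_L2_cond m A ma ->
     (forall B : {set T}, B != set0 -> B \subset A ->
        ma B = m B + (\sum_(C : {set T} | (C != set0) && ~~ (C \subset A)) m C)
                       / (2 ^+ #|A| - 1)
        /\ ma B = m B + pl m (~: A) / (2 ^+ #|A| - 1)) /\
     (forall B : {set T}, ~~ (B \subset A) -> ma B = 0)).
Proof.
move=> [m0 mge0 m1] A0.
set s := \sum_(C : {set T} | (C != set0) && ~~ (C \subset A)) m C.
set N : R := 2 ^+ #|A| - 1.
have nsub0 : forall B : {set T}, ~~ (B \subset A) -> B != set0.
  by move=> B; apply: contra => /eqP ->; rewrite sub0set.
have hN : \sum_(B : {set T} | (B != set0) && (B \subset A)) (1:R) = N.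
  have H2 : \sum_(B : {set T} | B \subset A) (1:R) = 2 ^+ #|A|.
    rewrite (eq_bigl (fun B => B \in powerset A)); last by move=> B; rewrite powersetE.
    by rewrite sumr_const card_powerset natrX.
  rewrite /N -H2 [in RHS](bigD1 set0) ?sub0set //= addrAC subrr add0r.
  by apply: eq_bigl => B; rewrite andbC.
have Npos : 0 < N.
  rewrite -hN (bigD1 A) ?A0 ?subxx //=.
  by rewrite ltr_wpDr ?ltr01 // sumr_ge0.
have N0 : N != 0 by rewrite gt_eqF.
have hs : \sum_(B : {set T} | (B != set0) && (B \subset A)) m B + s = 1.
  rewrite -m1 [in RHS](bigID (fun B : {set T} => B \subset A)) /=.
  rewrite [in RHS](bigD1 set0) ?sub0set //= m0 add0r; congr (_ + _).
    by apply: eq_bigl => B; rewrite andbC.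
  by apply: eq_bigl => B; case: (boolP (B \subset A)) => H; rewrite ?andbF ?andbT ?nsub0.
pose ma0 : {ffun {set T} -> R} :=
  [ffun B => if (B != set0) && (B \subset A) then m B + s / N else 0].
have s_ge0 : 0 <= s by rewrite sumr_ge0.
have ma0_in : in_MA A ma0.
  split; last by move=> B; rewrite ffunE; case: ifP => [/andP[]|]; rewrite ?eqxx.
  split.
  - by rewrite ffunE eqxx.
  - move=> B; rewrite ffunE; case: ifP => // _.
    by rewrite addr_ge0 // divr_ge0 // ltW.
  - under eq_bigr do rewrite ffunE.
    rewrite -big_mkcond /= big_split /=.
    have -> : \sum_(i | (i != set0) && (i \subset A)) s / N =
              (\sum_(i | (i != set0) && (i \subset A)) 1) * (s / N).
      by rewrite mulr_suml; apply: eq_bigr => *; rewrite mul1r.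
    by rewrite hN mulrC divfK.
pose D (a b : {ffun {set T} -> R}) := \sum_(B : {set T} | B != set0) (a B - b B) ^+ 2.
have D_ge0 : forall a b, 0 <= D a b.
  by move=> a b; apply: sumr_ge0 => B _; rewrite sqr_ge0.
have key : forall m', in_MA A m' -> D m m' = D m ma0 + D ma0 m'.
  move=> m' [[m'0 _ m'1] m'f].
  have hy : \sum_(B : {set T} | B != set0) (ma0 B - m' B) = 0.
    have := ma0_in => -[[ma00 _ ma01] _].
    have : \sum_(B : {set T}) (ma0 B - m' B) = 0.
      by rewrite sumrB ma01 m'1 subrr.
    rewrite (bigD1 set0) //= ma00 m'0 subrr add0r => H.
    by rewrite -[in RHS]H; apply: eq_bigl.
  have pt : forall B : {set T}, B != set0 ->
     (m B - m' B) ^+ 2 = (m B - ma0 B) ^+ 2 + (ma0 B - m' B) ^+ 2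
                          + 2 * (- (s / N)) * (ma0 B - m' B).
    move=> B B0; rewrite ffunE B0 /=; case: ifP => HB.
      by ring.
    have -> : m' B = 0.
      by apply/eqP; apply: contraFT HB => /m'f.
    by ring.
  rewrite /D (eq_bigr _ pt) !big_split /= -mulr_sumr hy mulr0 addr0.
  by [].
have opt : is_L2_cond m A ma0.
  split=> // m' Hm'; rewrite /massL2 ler_sqrt; last exact: D_ge0.
  by rewrite -/(D m ma0) -/(D m m') (key _ Hm') lerDl D_ge0.
have uniq : forall ma, is_L2_cond m A ma -> ma = ma0.
  move=> ma [Hma Hle]; have := Hle _ ma0_in.
  rewrite /massL2 ler_sqrt; last exact: D_ge0.
  rewrite -/(D m ma0) -/(D m ma) (key _ Hma) gerDl => HD.
  have : D ma0 ma == 0 by rewrite eq_le HD D_ge0.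
  rewrite psumr_eq0; last by move=> *; rewrite sqr_ge0.
  move=> /allP Hall; apply/ffunP => B.
  case: (eqVneq B set0) => [->|B0].
    by have [[-> _ _] _] := Hma; rewrite ffunE eqxx.
  have := Hall B (mem_index_enum _); rewrite B0 /= sqrf_eq0 subr_eq0 => /eqP.
  by move=> <-.
split.
  exists ma0; split => // ma Hma; exact/esym/uniq.
move=> ma /uniq ->.
have hpl : pl m (~: A) = s.
  have belA : bel m A = \sum_(B : {set T} | (B != set0) && (B \subset A)) m B.
    rewrite /bel (bigD1 set0) ?sub0set //= m0 add0r.
    by apply: eq_bigl => B; rewrite andbC.
  by rewrite /pl setCK belA; apply/eqP; rewrite subr_eq addrC hs.
split; last first.
  by move=> B HB; rewrite ffunE (negbTE HB) andbF.
by move=> B B0 BA; rewrite ffunE B0 BA hpl.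
Qed.
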